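(* For disjunctive guarded systems of type $(A,B)$: for all $n\ge|B|+1$, if $(A,B)^{(1,n)}$ has a deadlock then $(A,B)^{(1,n+1)}$ has a deadlock.
   Context: A process template is $U=(Q_U,\mathit{init}_U,\Sigma_U,\delta_U)$ with finite states $Q_U$, initial state $\mathit{init}_U$, finite input alphabet $\Sigma_U$ and guarded transitions $\delta_U\subseteq Q_U\times\Sigma_U\times 2^{Q_A\cup Q_B}\times Q_U$; templates $A,B$ have disjoint state sets and disjoint alphabets, and $|B|=|Q_B|$. The system $(A,B)^{(1,n)}$ consists of one copy of $A$ and $n$ copies $B_1,\dots,B_n$ of $B$; a global state $s$ gives each process a local state, a global input $e$ gives each process an input letter, and initially all processes are in their initial states. In a disjunctive system a guard $g$ is satisfied for process $p$ in $s$ iff some process $p'\ne p$ has $s(p')\in g$. A local transition $(q,\sigma,g,q')$ of $p$ is enabled for $(s,e)$ if $s(p)=q$, $e(p)=\sigma$ and $g$ is satisfied for $p$ in $s$; a process is enabled if one of its transitions is; a global step changes the state of exactly one process along an enabled transition. A path is a sequence of configurations $(s_1,e_1,p_1),(s_2,e_2,p_2),\dots$ where $p_t$ makes the step from $s_t$ to $s_{t+1}$ under $e_t$, a configuration $(s,e,\bot)$ occurs (as the last one) exactly when all processes are disabled, and $e_{t+1}(p)=e_t(p)$ for every process $p$ not moving at moment $t$. A run is a maximal path from the initial state. A run is globally deadlocked if it is finite; an infinite run is locally deadlocked if some process is disabled at all moments from some moment on; a system has a deadlock if it has a globally or locally deadlocked run. *)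

(* Defs.v *)
From mathcomp Require Import all_boot.
Set Implicit Arguments. Unset Strict Implicit. Unset Printing Implicit Defensive.

Section Guarded.
Variables (QA QB SA SB : finType).

(* Q_A and Q_B are disjoint: the union Q_A \cup Q_B is the sum type. *)
Definition GQ : finType := (QA + QB)%type.

Record template (Q S : finType) := Template {
  t_init : Q;
  t_delta : {set (Q * S * {set GQ} * Q)} }.

Variables (A : template QA SA) (B : template QB SB).

(* Processes of (A,B)^(1,n): None = the copy of A, Some i = B_i. *)
Definition proc (n : nat) := option 'I_n.
Definition gstate (n : nat) := (QA * ('I_n -> QB))%type.
Definition ginput (n : nat) := (SA * ('I_n -> SB))%type.

Definition lstate n (s : gstate n) (p : proc n) : GQ :=
  match p with None => inl s.1 | Some i => inr (s.2 i) end.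

Definition guard_sat n (s : gstate n) (p : proc n) (g : {set GQ}) : Prop :=
  exists p' : proc n, p' <> p /\ lstate s p' \in g.

Definition trans_enabled n (s : gstate n) (e : ginput n) (p : proc n)
  (g : {set GQ}) (q' : GQ) : Prop :=
  match p with
  | None => exists qa, q' = inl qa /\
      (s.1, e.1, g, qa) \in t_delta A /\ guard_sat s p g
  | Some i => exists qb, q' = inr qb /\
      (s.2 i, e.2 i, g, qb) \in t_delta B /\ guard_sat s p g
  end.

Definition enabled n (s : gstate n) (e : ginput n) (p : proc n) : Prop :=
  exists g q', trans_enabled s e p g q'.

Definition step n (s : gstate n) (e : ginput n) (p : proc n) (s' : gstate n) : Prop :=
  exists g q', trans_enabled s e p g q' /\
    lstate s' p = q' /\ forall p', p' <> p -> lstate s' p' = lstate s p'.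

Definition inputs_kept n (e : ginput n) (p : proc n) (e' : ginput n) : Prop :=
  (p <> None -> e'.1 = e.1) /\ (forall i, p <> Some i -> e'.2 i = e.2 i).

Definition initial n (s : gstate n) : Prop :=
  s.1 = t_init A /\ forall i, s.2 i = t_init B.

Definition config n := (gstate n * ginput n * proc n)%type.

Definition valid_step n (rho : nat -> config n) (t : nat) : Prop :=
  step (rho t).1.1 (rho t).1.2 (rho t).2 (rho t.+1).1.1 /\
  inputs_kept (rho t).1.2 (rho t).2 (rho t.+1).1.2.

(* A finite run: configurations 0..k-1 are real steps, and the last
   configuration (s_k, e_k, bot) has all processes disabled.
   A run is globally deadlocked iff it is finite. *)
Definition has_global_deadlock n : Prop :=
  exists (rho : nat -> config n) (k : nat),
    initial (rho 0).1.1 /\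
    (forall t, t < k -> valid_step rho t) /\
    (forall p : proc n, ~ enabled (rho k).1.1 (rho k).1.2 p).

(* An infinite run (all p_t enabled, since each step is along an enabled
   transition) in which some process is disabled from some moment on. *)
Definition has_local_deadlock n : Prop :=
  exists rho : nat -> config n,
    initial (rho 0).1.1 /\
    (forall t, valid_step rho t) /\
    exists (p : proc n) (t0 : nat),
      forall t, t0 <= t -> ~ enabled (rho t).1.1 (rho t).1.2 p.

Definition has_deadlock n : Prop := has_global_deadlock n \/ has_local_deadlock n.

End Guarded.

(* Main.v *)
Require Import Defs.
From mathcomp Require Import all_boot.
Set Implicit Arguments. Unset Strict Implicit. Unset Printing Implicit Defensive.

Section Aux.
Variables (QA QB SA SB : finType)
  (A : template QA QB QA SA) (B : template QA QB QB SB).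

Definition ext n (T : Type) (f : 'I_n -> T) (x : T) (k : 'I_n.+1) : T :=
  match (insub (val k) : option 'I_n) with Some k' => f k' | None => x end.

Lemma ext_w n T f x (j : 'I_n) : @ext n T f x (widen_ord (leqnSn n) j) = f j.
Proof.
rewrite /ext; case: insubP => [k' _ hk|/=]; last by rewrite ltn_ord.
by congr f; apply: val_inj; rewrite hk.
Qed.

Lemma ext_max n T f x : @ext n T f x ord_max = x.
Proof. by rewrite /ext; case: insubP => [k' h _|//]; rewrite /= ltnn in h. Qed.

Lemma ext_all n T f x (c : T) : (forall j, f j = c) -> x = c ->
  forall k, @ext n T f x k = c.
Proof. by move=> hf hx k; rewrite /ext; case: insubP. Qed.

Definition emb n (p : proc n) : proc n.+1 := omap (widen_ord (leqnSn n)) p.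
Definition newp n : proc n.+1 := Some ord_max.

Lemma proc_cases n (q : proc n.+1) : q = newp n \/ exists p, q = emb p.
Proof.
case: q => [k|]; last by right; exists None.
case: (ltnP k n) => h.
  by right; exists (Some (Ordinal h)); congr Some; apply: val_inj.
left; congr Some; apply: val_inj => /=; apply/eqP.
by rewrite eqn_leq h -ltnS ltn_ord.
Qed.

Lemma emb_inj n (p p' : proc n) : emb p = emb p' -> p = p'.
Proof.
case: p => [j|]; case: p' => [j'|] //= [] e.
by congr Some; apply: val_inj.
Qed.

Lemma emb_newp n (p : proc n) : emb p <> newp n.
Proof.
case: p => [j|] //= [] e.
by move: (ltn_ord j); rewrite e ltnn.
Qed.

Definition liftS n (s : gstate QA QB n) (x : QB) : gstate QA QB n.+1 :=
  (s.1, ext s.2 x).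
Definition liftE n (e : ginput SA SB n) (y : SB) : ginput SA SB n.+1 :=
  (e.1, ext e.2 y).

Lemma lstate_emb n (s : gstate QA QB n) x p :
  lstate (liftS s x) (emb p) = lstate s p.
Proof. by case: p => [j|] //=; rewrite ext_w. Qed.

Lemma lstate_new n (s : gstate QA QB n) x :
  lstate (liftS s x) (newp n) = inr x.
Proof. by rewrite /= ext_max. Qed.

Definition loc_trans n (s : gstate QA QB n) (e : ginput SA SB n) (p : proc n)
  (g : {set GQ QA QB}) (q' : GQ QA QB) : Prop :=
  match p with
  | None => exists qa, q' = inl qa /\ (s.1, e.1, g, qa) \in t_delta A
  | Some j => exists qb, q' = inr qb /\ (s.2 j, e.2 j, g, qb) \in t_delta B
  end.

Lemma trans_iff n (s : gstate QA QB n) e p g q' :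
  trans_enabled A B s e p g q' <-> loc_trans s e p g q' /\ guard_sat s p g.
Proof.
case: p => [j|] /=; split.
- by move=> [qb [h1 [h2 h3]]]; split => //; exists qb.
- by move=> [[qb [h1 h2]] h3]; exists qb.
- by move=> [qb [h1 [h2 h3]]]; split => //; exists qb.
- by move=> [[qb [h1 h2]] h3]; exists qb.
Qed.

Lemma loc_emb n (s : gstate QA QB n) e x y p g q' :
  loc_trans (liftS s x) (liftE e y) (emb p) g q' = loc_trans s e p g q'.
Proof. by case: p => [j|] //=; rewrite !ext_w. Qed.

Lemma loc_new n (s : gstate QA QB n) e x y g q' :
  loc_trans (liftS s x) (liftE e y) (newp n) g q' =
  exists qb, q' = inr qb /\ (x, y, g, qb) \in t_delta B.
Proof. by rewrite /= !ext_max. Qed.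

Lemma G1 n (s : gstate QA QB n) x p g :
  guard_sat s p g -> guard_sat (liftS s x) (emb p) g.
Proof.
move=> [p' [ne h]]; exists (emb p'); split; first by move/emb_inj.
by rewrite lstate_emb.
Qed.

Lemma G2 n (s : gstate QA QB n) x p g :
  guard_sat (liftS s x) (emb p) g -> guard_sat s p g \/ inr x \in g.
Proof.
move=> [q [ne h]]; case: (proc_cases q) => [e|[p' e]]; subst q.
  by right; rewrite lstate_new in h.
left; exists p'; split; first by move=> e0; apply: ne; rewrite e0.
by rewrite lstate_emb in h.
Qed.

Lemma G3 n (s : gstate QA QB n) x g :
  guard_sat (liftS s x) (newp n) g -> exists p', lstate s p' \in g.
Proof.
move=> [q [ne h]]; case: (proc_cases q) => [e|[p' e]]; subst q => //.
by exists p'; rewrite lstate_emb in h.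
Qed.

Lemma L1 n (s s' : gstate QA QB n) e p x y :
  step A B s e p s' -> step A B (liftS s x) (liftE e y) (emb p) (liftS s' x).
Proof.
move=> [g [q' [/trans_iff [hl hg] [hs ho]]]].
exists g, q'; split; first by apply/trans_iff; rewrite loc_emb; split => //; apply: G1.
split; first by rewrite lstate_emb.
move=> q hq; case: (proc_cases q) => [->|[p' e0]]; first by rewrite !lstate_new.
subst q; rewrite !lstate_emb; apply: ho => e1; apply: hq; by rewrite e1.
Qed.

Lemma I1 n (e e' : ginput SA SB n) p y :
  inputs_kept e p e' -> inputs_kept (liftE e y) (emb p) (liftE e' y).
Proof.
move=> [h1 h2]; split => [hp|k hk] /=.
  by apply: h1 => e0; apply: hp; rewrite e0.
case: (proc_cases (Some k)) => [[ek]|[p' ep]]; first by rewrite ek !ext_max.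
case: p' ep => [j|] //= [ek]; rewrite ek in hk *; rewrite !ext_w; apply: h2 => e0; apply: hk.
by rewrite e0.
Qed.

Lemma L2 n (s s' : gstate QA QB n) e e' i :
  step A B s e (Some i) s' ->
  step A B (liftS s' (s.2 i)) (liftE e' (e.2 i)) (newp n) (liftS s' (s'.2 i)).
Proof.
move=> [g [q' [/trans_iff [hl hg] [hs ho]]]].
exists g, q'; split.
  apply/trans_iff; rewrite loc_new; split => //.
  move: hg => [p' [ne h]]; exists (emb p'); split; first exact: emb_newp.
  by rewrite lstate_emb (ho p' ne).
split; first by rewrite lstate_new -hs.
move=> q hq; case: (proc_cases q) => [e0|[p' e0]]; subst q => //.
by rewrite !lstate_emb.
Qed.

Lemma I2 n (e' : ginput SA SB n) y y' :
  inputs_kept (liftE e' y) (newp n) (liftE e' y').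
Proof.
split => // k hk /=.
case: (proc_cases (Some k)) => [[e0]|[p' ep]]; first by subst k.
case: p' ep => [j|] //= [->]; by rewrite !ext_w.
Qed.

Lemma step_other n (s s' : gstate QA QB n) e p j :
  step A B s e p s' -> p <> Some j -> s'.2 j = s.2 j.
Proof.
move=> [g [q' [_ [_ ho]]]] ne.
have := ho (Some j) (fun e => ne (esym e)); by case.
Qed.

Lemma loc_transfer n (s s' : gstate QA QB n) e e' p0 p g q' :
  step A B s e p0 s' -> inputs_kept e p0 e' -> p <> p0 ->
  loc_trans s' e' p g q' -> loc_trans s e p g q'.
Proof.
move=> [g0 [q0 [_ [_ ho]]]] [k1 k2] ne.
have := ho p ne; case: p ne => [j|] ne /= [->].
  by rewrite k2 // => e0; apply: ne.
by rewrite k1 // => e0; apply: ne.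
Qed.


Section Run.
Variables (n : nat) (rho : nat -> config QA QB SA SB n) (i : 'I_n).

Fixpoint pos (m : nat) : nat * bool :=
  match m with
  | 0 => (0, false)
  | m'.+1 => let (t, b) := pos m' in
      if b then (t.+1, false)
      else if (rho t).2 == Some i then (t, true) else (t.+1, false)
  end.

Definition cfg (t : nat) (b : bool) : config QA QB SA SB n.+1 :=
  if b then (liftS (rho t.+1).1.1 ((rho t).1.1.2 i),
             liftE (rho t.+1).1.2 ((rho t).1.2.2 i), newp n)
  else (liftS (rho t).1.1 ((rho t).1.1.2 i),
        liftE (rho t).1.2 ((rho t).1.2.2 i), emb (rho t).2).

Definition rho' (m : nat) := cfg (pos m).1 (pos m).2.

Lemma pos_succ m : pos m.+1 =
  if (pos m).2 then ((pos m).1.+1, false)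
  else if (rho (pos m).1).2 == Some i then ((pos m).1, true)
  else ((pos m).1.+1, false).
Proof. by rewrite /=; case: (pos m). Qed.

Lemma pos_inv m : (pos m).2 -> (rho (pos m).1).2 = Some i.
Proof.
case: m => [//|m]; rewrite pos_succ.
case: (pos m).2 => //; case: eqP => //=.
Qed.

Lemma pos_mono m : (pos m).1 <= (pos m.+1).1.
Proof. rewrite pos_succ; case: (pos m).2 => //=; case: eqP => //=. Qed.

Lemma pos_mono2 m m' : m <= m' -> (pos m).1 <= (pos m').1.
Proof.
elim: m' => [|m' IH]; first by rewrite leqn0 => /eqP ->.
rewrite leq_eqVlt => /orP [/eqP -> //|h].
exact: leq_trans (IH h) (pos_mono m').
Qed.

Lemma pos_reach t : exists m, pos m = (t, false) /\
  forall m', m' < m -> (pos m').1 < t.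
Proof.
elim: t => [|t [m [hm hlt]]]; first by exists 0.
case E: ((rho t).2 == Some i).
- exists m.+2; split.
    by rewrite pos_succ pos_succ hm /= E.
  move=> m'; rewrite ltnS leq_eqVlt => /orP [/eqP ->|].
    by rewrite pos_succ hm /= E.
  rewrite ltnS leq_eqVlt => /orP [/eqP ->|h]; first by rewrite hm.
  exact: ltn_trans (hlt _ h) _.
- exists m.+1; split; first by rewrite pos_succ hm /= E.
  move=> m'; rewrite ltnS leq_eqVlt => /orP [/eqP ->|h]; first by rewrite hm.
  exact: ltn_trans (hlt _ h) _.
Qed.

Lemma valid_new m : valid_step A B rho (pos m).1 -> valid_step A B rho' m.
Proof.
rewrite /valid_step /rho' pos_succ.
have hinv := @pos_inv m.
case: (pos m) hinv => t b /= hinv [hs hk].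
case: b hinv => [hinv|_] /=.
  have hi := hinv erefl; rewrite hi in hs hk.
  split; [exact: L2 | exact: I2].
case: eqP => h /=.
  split; [exact: L1 | exact: I1].
have e1 := step_other (j:=i) hs h.
have e2 : (rho t.+1).1.2.2 i = (rho t).1.2.2 i.
  by apply: hk.2 => e; apply: h; rewrite e.
rewrite e1 e2; split; [exact: L1 | exact: I1].
Qed.

Lemma init_new : initial A B (rho 0).1.1 -> initial A B (rho' 0).1.1.
Proof.
move=> [h1 h2]; split => //= k.
by apply: ext_all.
Qed.

End Run.

End Aux.

Theorem mainTheorem8 (QA QB SA SB : finType)
  (A : template QA QB QA SA) (B : template QA QB QB SB) (n : nat) :
  #|QB|.+1 <= n ->
  has_deadlock A B n -> has_deadlock A B n.+1.
Proof.
move=> hn [[rho [k [hi [hv hd]]]] | [rho [hi [hv [p [t0 hd]]]]]].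
- have : ~~ injectiveb (rho k).1.1.2.
    apply/negP => /injectiveP /leq_card; rewrite card_ord => h.
    by move: (leq_ltn_trans h hn); rewrite ltnn.
  move/injectivePn => [i [j ne eij]].
  have [M [hM hlt]] := pos_reach rho i k.
  left; exists (rho' rho i), M; split; first exact: init_new.
  split.
    by move=> m hm; apply: valid_new; apply: hv; exact: hlt.
  move=> q; rewrite /rho' hM /=.
  case: (proc_cases q) => [->|[p ->]] [g [q' /trans_iff [hl hg]]].
  + rewrite loc_new in hl; have [p' hp'] := G3 hg.
    have [p'' [ne'' hp'']] : exists p'', p'' <> Some i /\
        lstate (rho k).1.1 p'' \in g.
      case: (eqVneq p' (Some i)) => [ep|nep]; last by exists p'; split => //; apply/eqP.
      exists (Some j); split.
        by move=> /Some_inj eji; rewrite eji eqxx in ne.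
      by rewrite ep /= in hp'; rewrite /= -eij.
    apply: (hd (Some i)); exists g, q'; apply/trans_iff; split => //.
    by exists p''.
  + rewrite loc_emb in hl; case: (G2 hg) => [hg'|hx].
      by apply: (hd p); exists g, q'; apply/trans_iff.
    apply: (hd p); exists g, q'; apply/trans_iff; split => //.
    case: (eqVneq p (Some i)) => [ep|nep].
      exists (Some j); split.
        by rewrite ep => /Some_inj eji; rewrite eji eqxx in ne.
      by rewrite /= -eij.
    exists (Some i); split => //.
    by move=> e; rewrite e eqxx in nep.
- have q0 : 0 < #|QB| by apply/card_gt0P; exists (t_init B).
  have n2 : 1 < n by apply: leq_trans hn.
  have n1 : 0 < n by apply: ltn_trans n2.
  have [i hip] : exists i : 'I_n, Some i <> p.
    case: p {hd} => [j|]; last by exists (Ordinal n1).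
    case: (eqVneq (val j) 0) => hj.
      by exists (Ordinal n2) => -[e]; rewrite -e in hj.
    by exists (Ordinal n1) => -[e]; rewrite -e in hj.
  have [M0 [hM0 _]] := pos_reach rho i t0.
  right; exists (rho' rho i); split; first exact: init_new.
  split; first by move=> m; apply: valid_new; apply: hv.
  exists (emb p), M0 => m hm.
  have ht : t0 <= (pos rho i m).1.
    by have := pos_mono2 rho i hm; rewrite hM0.
  rewrite /rho'; have hinv := @pos_inv _ _ _ _ _ rho i m.
  case: (pos rho i m) ht hinv => t b /= ht hinv.
  case: b hinv => [hinv|_] /= [g [q' /trans_iff [hl hg]]]; rewrite loc_emb in hl.
  + have hi' := hinv erefl.
    case: (G2 hg) => [hg'|hx].
      by apply: (hd t.+1 (leqW ht)); exists g, q'; apply/trans_iff.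
    apply: (hd t ht); exists g, q'; apply/trans_iff; split.
      apply: loc_transfer (hv t).1 (hv t).2 _ hl.
      by rewrite hi' => e; apply: hip; rewrite e.
    by exists (Some i); split => // e; apply: hip; rewrite e.
  + case: (G2 hg) => [hg'|hx].
      by apply: (hd t ht); exists g, q'; apply/trans_iff.
    apply: (hd t ht); exists g, q'; apply/trans_iff; split => //.
    by exists (Some i); split => // e; apply: hip; rewrite e.
Qed.
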